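(* Let $n\ge1$ and $0\le k\le n$. There exists a nonempty finite multiset $\{\mathcal{B}_1,\dots,\mathcal{B}_s\}$ of quadratic monomial bases of $Z_k$ which is $X$-balanced, i.e. such that, counting each monomial $x_ax_b$ in each $\mathcal{B}_\ell$ with the exponents of its variables and summing over $\ell=1,\dots,s$, every variable $x_0,\dots,x_n$ occurs the same total number of times.
   Context: Let $x_i:=z^i$ for $0\le i\le n$, and $Z_k:=\operatorname{span}\{z^i: k\le i\le 2n-k\}\subset\mathbb{C}[z]$. A quadratic monomial basis of $Z_k$ is a set of monomials $x_ax_b$ ($0\le a\le b\le n$) whose images $z^{a+b}$ form a basis of $Z_k$, i.e. the map $x_ax_b\mapsto a+b$ is a bijection from the set onto $\{k,k+1,\dots,2n-k\}$. *)

(* Defs.v *)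
From mathcomp Require Import all_boot.
Set Implicit Arguments. Unset Strict Implicit. Unset Printing Implicit Defensive.

(* A monomial x_a x_b (0 <= a <= b <= n) is represented by the pair (a, b)
   of indices in 'I_n.+1; its image in C[z] is z^(a+b). *)
Definition monomial (n : nat) := ('I_n.+1 * 'I_n.+1)%type.

(* B is a quadratic monomial basis of Z_k = span{z^i : k <= i <= 2n-k}:
   all pairs satisfy a <= b, and (a,b) |-> a+b is a bijection from B
   onto {k, ..., 2n-k}. *)
Definition is_quad_monomial_basis (n k : nat) (B : {set monomial n}) : Prop :=
  (forall p, p \in B -> (p.1 <= p.2)%N) /\
  (forall p, p \in B -> (k <= p.1 + p.2 <= 2 * n - k)%N) /\
  {in B &, injective (fun p : monomial n => (p.1 + p.2)%N)} /\
  (forall m, (k <= m <= 2 * n - k)%N -> exists2 p, p \in B & (p.1 + p.2)%N = m).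

Definition var_occ (n : nat) (i : 'I_n.+1) (p : monomial n) : nat :=
  ((p.1 == i) + (p.2 == i))%N.

Definition total_occ (n : nat) (s : seq {set monomial n}) (i : 'I_n.+1) : nat :=
  (\sum_(B <- s) \sum_(p in B) var_occ i p)%N.

Definition X_balanced (n : nat) (s : seq {set monomial n}) : Prop :=
  exists c, forall i : 'I_n.+1, total_occ s i = c.

(* Main.v *)
Require Import Defs.
From mathcomp Require Import all_boot.
From mathcomp Require Import zify.
Set Implicit Arguments. Unset Strict Implicit. Unset Printing Implicit Defensive.


Lemma cnt_int a b x y :
  \sum_(a <= m < b) (((x <= m) && (m < y)) : nat) = minn b y - maxn a x.
Proof.
elim: b => [|b IH].
  by rewrite big_geq //; lia.
case: (leqP a b) => hab.
  rewrite big_nat_recr //= IH.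
  case: (boolP ((x <= b) && (b < y))) => /= h; lia.
by rewrite big_geq //; lia.
Qed.

Lemma cnt_ord N x y :
  \sum_(m < N) (((x <= m) && (m < y)) : nat) = minn N y - x.
Proof.
rewrite -(big_mkord xpredT (fun m => (((x <= m) && (m < y)) : nat))) cnt_int; lia.
Qed.


Section Bas.
Variables (n lo : nat) (f : nat -> nat).
Hypothesis hlo : lo <= n.
Hypothesis hf : forall m, lo <= m <= 2 * n - lo -> f m <= m - f m <= n.

Definition mkp (m : nat) : monomial n := (inord (f m), inord (m - f m)).
Definition rowsS : {set 'I_(2*n).+1} := [set m : 'I_(2*n).+1 | lo <= m <= 2 * n - lo].
Definition bas : {set monomial n} := [set mkp (nat_of_ord m) | m in rowsS].

Lemma mkp1 m : lo <= m <= 2 * n - lo -> ((mkp m).1 : nat) = f m.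
Proof. move=> h; rewrite /mkp /= inordK //; have := hf h; lia. Qed.
Lemma mkp2 m : lo <= m <= 2 * n - lo -> ((mkp m).2 : nat) = m - f m.
Proof. move=> h; rewrite /mkp /= inordK //; have := hf h; lia. Qed.

Lemma mkp_inj : {in rowsS &, injective (fun m : 'I_(2*n).+1 => mkp (nat_of_ord m))}.
Proof.
move=> m1 m2; rewrite !inE => h1 h2 e.
have e1 := mkp1 h1; have e2 := mkp2 h1; have e3 := mkp1 h2; have e4 := mkp2 h2.
have := hf h1; have := hf h2.
rewrite /= in e; rewrite e in e1 e2 => ? ?.
apply: ord_inj; lia.
Qed.

Lemma bas_ok : is_quad_monomial_basis lo bas.
Proof.
split; [|split; [|split]].
- move=> p /imsetP[m]; rewrite inE => h ->; rewrite mkp1 // mkp2 //; have := hf h. lia.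
- move=> p /imsetP[m]; rewrite inE => h ->; rewrite mkp1 // mkp2 //; have := hf h;  lia.
- move=> p1 p2 /imsetP[m1 h1 ->] /imsetP[m2 h2 ->] /= e.
  move: (h1) (h2); rewrite !inE => h1' h2'.
  have := hf h1'; have := hf h2'.
  move: e; rewrite !mkp1 // !mkp2 // => e _ _.
  have -> : m1 = m2 by apply: ord_inj; move: (hf h1') (hf h2'); lia.
  by [].
- move=> m hm.
  have hm' : m < (2 * n).+1 by move: hm;  lia.
  exists (mkp m).
    apply/imsetP; exists (Ordinal hm'); first by rewrite inE.
    by [].
  rewrite mkp1 // mkp2 //; have := hf hm; lia.
Qed.

Lemma bas_occ (i : 'I_n.+1) :
  \sum_(p in bas) var_occ i p =
  \sum_(m < (2*n).+1) (((lo <= m <= 2 * n - lo) && (f m == i)) : nat) +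
  \sum_(m < (2*n).+1) (((lo <= m <= 2 * n - lo) && (m - f m == i)) : nat).
Proof.
rewrite big_imset /=; last exact: mkp_inj.
rewrite -big_split /= (big_mkcond (fun m => m \in rowsS)) /=.
apply: eq_bigr => m _; rewrite inE.
case: ifP => h //=.
rewrite /var_occ -!val_eqE /= mkp1 // mkp2 //.
Qed.
End Bas.

Definition fC (M t d m : nat) := t + maxn (m - 2*t - M) ((m - 2*t - d) %/ 2).
Definition xa (M d j : nat) := if j == 0 then 0 else minn (M + j) (d + 2*j).
Definition ya (M d j : nat) := (minn (M + j) (d + 2*j + 1)).+1.
Definition xb (M d j : nat) := maxn j (2*j - 1 - d).
Definition yb (M d j : nat) := if j < M then maxn j.+1 (2*j + 1 - d) else (2*M).+1.
Definition prof (M K d j : nat) :=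
  (minn (2*M - K).+1 (ya M d j) - maxn K (xa M d j)) +
  (minn (2*M - K).+1 (yb M d j) - maxn K (xb M d j)).



Lemma core_a M K d u j : K <= M -> d <= M ->
  ((K <= u <= 2*M - K) && (maxn (u - M) ((u - d) %/ 2) == j)) =
  ((maxn K (xa M d j) <= u) && (u < minn (2*M-K).+1 (ya M d j))).
Proof.
move=> hK hd; rewrite /xa /ya.
case: j => [|j] /=; apply/idP/idP; lia.
Qed.



Lemma bge M d u j : j <= M ->
  (j <= u - maxn (u - M) ((u - d) %/ 2)) = (maxn j (2*j - 1 - d) <= u).
Proof. move=> hj; apply/idP/idP; lia. Qed.

Lemma bge1 M d u j : j < M ->
  (u - maxn (u - M) ((u - d) %/ 2) <= j) = (u < maxn j.+1 (2*j + 1 - d)).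
Proof. move=> hj; apply/idP/idP; lia. Qed.

Lemma bleM M d u : u - maxn (u - M) ((u - d) %/ 2) <= M.
Proof. lia. Qed.

Ltac bsolve := move=> ?; repeat match goal with H : is_true (_ && _) |- _ => case/andP: H => ? ?
   | H : is_true (_ == _) |- _ => move/eqP: H => ? end;
  repeat (apply/andP; split); try (apply/eqP); lia.

Lemma core_b M K d u j : K <= M -> d <= M -> j <= M ->
  ((K <= u <= 2*M - K) && (u - maxn (u - M) ((u - d) %/ 2) == j)) =
  ((maxn K (xb M d j) <= u) && (u < minn (2*M-K).+1 (yb M d j))).
Proof.
move=> hK hd hjM; rewrite /xb /yb eqn_leq (bge d u hjM).
case: (ltnP j M) => hj.
  rewrite (bge1 d u hj); apply/idP/idP; bsolve.
have ejM : j = M by lia.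
subst j; rewrite bleM /=; apply/idP/idP; bsolve.
Qed.

Lemma rng_a M K d u : K <= u <= 2*M - K -> maxn (u - M) ((u - d) %/ 2) <= M.
Proof. move=> /andP[h1 h2]; lia. Qed.
Lemma rng_b M K d u : K <= u <= 2*M - K -> u - maxn (u - M) ((u - d) %/ 2) <= M.
Proof. move=> /andP[h1 h2]; lia. Qed.

Lemma test1 M t K d m i : K <= M -> d <= M ->
  ((K + 2*t <= m <= 2*(M+2*t) - (K+2*t)) && (fC M t d m == i)) =
  ((2*t + maxn K (xa M d (i - t)) <= m) &&
   (m < if t <= i <= t + M then 2*t + minn (2*M-K).+1 (ya M d (i - t)) else 0)).
Proof.
move=> hK hd; rewrite /fC.
case: (ltnP m (2*t)) => hm.
  apply/idP/idP; first by lia.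
  case: ifP => _; lia.
have [u ->] : exists u, m = 2*t + u by exists (m - 2*t); lia.
have -> : 2 * t + u - 2 * t = u by lia.
have -> : (K + 2 * t <= 2 * t + u <= 2 * (M + 2 * t) - (K + 2 * t)) = (K <= u <= 2*M - K) by apply/idP/idP; lia.
have -> : (2 * t + maxn K (xa M d (i - t)) <= 2 * t + u) = (maxn K (xa M d (i - t)) <= u) by rewrite leq_add2l.
case: (boolP (t <= i <= t + M)) => hi; last first.
  rewrite ltn0 andbF; apply/negbTE; apply/negP => /andP[h /eqP e].
  have := rng_a d h; move: hi; lia.
have [j ej] : exists j, i = t + j by exists (i - t); case/andP: hi; lia.
subst i.
have -> : t + j - t = j by lia.
rewrite ltn_add2l -(@core_a M K d u j hK hd).
congr (_ && _); apply/eqP/eqP; lia.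
Qed.

Lemma test2 M t K d m i : K <= M -> d <= M ->
  ((K + 2*t <= m <= 2*(M+2*t) - (K+2*t)) && (m - fC M t d m == i)) =
  ((2*t + maxn K (xb M d (i - t)) <= m) &&
   (m < if t <= i <= t + M then 2*t + minn (2*M-K).+1 (yb M d (i - t)) else 0)).
Proof.
move=> hK hd; rewrite /fC.
case: (ltnP m (2*t)) => hm.
  apply/idP/idP; first by lia.
  case: ifP => _; lia.
have [u ->] : exists u, m = 2*t + u by exists (m - 2*t); lia.
have -> : 2 * t + u - 2 * t = u by lia.
have -> : (K + 2 * t <= 2 * t + u <= 2 * (M + 2 * t) - (K + 2 * t)) = (K <= u <= 2*M - K) by apply/idP/idP; lia.
have -> : (2 * t + maxn K (xb M d (i - t)) <= 2 * t + u) = (maxn K (xb M d (i - t)) <= u) by rewrite leq_add2l.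
case: (boolP (t <= i <= t + M)) => hi; last first.
  rewrite ltn0 andbF; apply/negbTE; apply/negP => /andP[h /eqP e].
  have := rng_b d h; have := rng_a d h; move: hi e; lia.
have [j ej] : exists j, i = t + j by exists (i - t); case/andP: hi; lia.
subst i.
have -> : t + j - t = j by lia.
rewrite ltn_add2l -(@core_b M K d u j hK hd); last by case/andP: hi => _ ?; lia.
congr (_ && _); apply/eqP/eqP; lia.
Qed.


Lemma fC_ok M t K d m : K <= M ->
  K + 2*t <= m <= 2*(M+2*t) - (K+2*t) -> fC M t d m <= m - fC M t d m <= M + 2*t.
Proof. rewrite /fC => hK /andP[h1 h2]; lia. Qed.

Definition CB n M K t d := bas n (K + 2*t) (fC M t d).

Lemma CB_ok n M K t d : K <= M -> n = M + 2*t -> is_quad_monomial_basis (K + 2*t) (CB n M K t d).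
Proof.
move=> hK hn.
have h1 : K + 2*t <= n by lia.
have h2 : forall m, K + 2*t <= m <= 2*n - (K + 2*t) -> fC M t d m <= m - fC M t d m <= n.
  by move=> m hm; have := @fC_ok M t K d m hK; rewrite -hn; apply.
exact: (bas_ok h1 h2).
Qed.

Lemma occC n M K t d (i : 'I_n.+1) : K <= M -> d <= M -> n = M + 2*t ->
  \sum_(p in CB n M K t d) var_occ i p = if t <= i <= t + M then prof M K d (i - t) else 0.
Proof.
move=> hK hd hn.
have h1 : K + 2*t <= n by lia.
have h2 : forall m, K + 2*t <= m <= 2*n - (K + 2*t) -> fC M t d m <= m - fC M t d m <= n.
  by move=> m hm; have := @fC_ok M t K d m hK; rewrite -hn; apply.
rewrite /CB (bas_occ h1 h2).
move: (i) h1 h2; rewrite hn => {}i _ _.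
under eq_bigr => m _ do rewrite test1 //.
under [X in _ + X]eq_bigr => m _ do rewrite test2 //.
rewrite !cnt_ord /prof.
case: ifP => _; lia.
Qed.

Ltac mm := repeat match goal with
 | |- context [minn ?a ?b] => let H := fresh in case: (leqP a b) => H;
      [rewrite (minn_idPl H) | rewrite (minn_idPr (ltnW H))]; try (exfalso; lia)
 | |- context [maxn ?a ?b] => let H := fresh in case: (leqP a b) => H;
      [rewrite (maxn_idPr H) | rewrite (maxn_idPl (ltnW H))]; try (exfalso; lia)
 end.

Ltac sp := repeat match goal with
 | |- context [if ?a <= ?b then _ else _] => let H := fresh in case: (leqP a b) => H; try (exfalso; lia)
 | |- context [if ?a < ?b then _ else _] => let H := fresh in case: (ltnP a b) => H; try (exfalso; lia)
 | |- context [if ?a == ?b then _ else _] => let H := fresh in case: (@eqP _ a b) => H; try (exfalso; lia)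
 end.

Definition indR M K x := if K <= x then if x <= 2*M - K then 1 else 0 else 0.
Definition profQ M K d j :=
  indR M K (d + 2*j) + indR M K (d + 2*j + 1) +
  (if d + 1 <= 2*j then indR M K (2*j - d - 1) else 0) +
  (if d <= 2*j then indR M K (2*j - d) else 0).
Definition profC M K d j :=
  (if j == 0 then d - K else 0) + (if j == M then d - K else 0) +
  (if K <= j then if j < d then 1 else 0 else 0) +
  (if M - d < j then if j <= M - K then 1 else 0 else 0) +
  (if j < M - d then 2 else if j == M - d then 1 else 0) +
  (if j == d then 1 else if d < j then 2 else 0).

Lemma QA M K d j : d <= K -> K <= M -> j <= M ->
  minn (2*M - K).+1 (ya M d j) - maxn K (xa M d j) = indR M K (d + 2*j) + indR M K (d + 2*j + 1).
Proof.
move=> h1 h2 hj; rewrite /indR /xa /ya.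
(case: j hj => [|j] hj /=; sp; mm; lia).
Qed.

Lemma QB M K d j : d <= K -> K <= M -> j <= M ->
  minn (2*M - K).+1 (yb M d j) - maxn K (xb M d j) =
  (if d + 1 <= 2*j then indR M K (2*j - d - 1) else 0) + (if d <= 2*j then indR M K (2*j - d) else 0).
Proof.
move=> h1 h2 hj; rewrite /indR /xb /yb.
(sp; mm; lia).
Qed.

Lemma CA M K d j : K <= d -> d <= M -> j <= M ->
  minn (2*M - K).+1 (ya M d j) - maxn K (xa M d j) =
  (if j == 0 then d - K else 0) + (if M - d < j then if j <= M - K then 1 else 0 else 0) +
  (if j < M - d then 2 else if j == M - d then 1 else 0).
Proof.
move=> h1 h2 hj; rewrite /xa /ya.
(case: j hj => [|j] hj /=; sp; mm; lia).
Qed.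

Lemma CBp M K d j : K <= d -> d <= M -> j <= M ->
  minn (2*M - K).+1 (yb M d j) - maxn K (xb M d j) =
  (if j == M then d - K else 0) + (if K <= j then if j < d then 1 else 0 else 0) +
  (if j == d then 1 else if d < j then 2 else 0).
Proof.
move=> h1 h2 hj; rewrite /xb /yb.
(sp; mm; lia).
Qed.

Lemma P_L M K L j : M = K + L -> K <= L -> j <= M ->
  prof M K L j = if j == 0 then L - K + 2 else if j == M then L - K + 2 else 2.
Proof.
move=> -> h hj; rewrite /prof CA ?CBp //; try lia.
(sp; lia).
Qed.

Lemma P_D0 M j : 1 <= M -> j <= M ->
  prof M 0 0 j = if j == 0 then 3 else if j == M then 3 else 4.
Proof.
move=> h hj; rewrite /prof QA ?QB // /indR.
(sp; lia).
Qed.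

Lemma P_D1 M j : 2 <= M -> j <= M ->
  prof M 1 0 j = if j == 0 then 1 else if j == M then 1 else 4.
Proof.
move=> h hj; rewrite /prof QA ?QB // /indR; try lia.
(sp; lia).
Qed.

Lemma P_11 j : j <= 1 -> prof 1 1 0 j = 1.
Proof. by case: j => [|[|j]]. Qed.

Lemma P_6 M K L j : M = K + L -> 2*L + 2 <= K -> j <= M ->
  prof M K M j = if j == 0 then L + 1 else if j == M then L + 1 else if j <= L then 1 else if K <= j then 1 else 0.
Proof.
move=> -> h hj; rewrite /prof CA ?CBp //; try lia.
(sp; lia).
Qed.

Lemma P_4 M K L j : M = 3*L+1 -> K = 2*L+1 -> 1 <= L -> j <= M ->
  prof M K 0 j + 3 * prof M K K j =
  if j < L then 6 else if 2*L+1 < j then 6 else 4.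
Proof.
move=> -> -> h hj; rewrite /prof (@QA (3*L+1) (2*L+1) 0 j) ?(@QB (3*L+1) (2*L+1) 0 j); try lia.
rewrite (@CA (3*L+1) (2*L+1) (2*L+1) j) ?(@CBp (3*L+1) (2*L+1) (2*L+1) j); try lia.
rewrite /indR.
(sp; lia).
Qed.

Lemma P_5 M K L j : M = K + L -> L < K -> K <= 2*L -> j <= M ->
  prof M K (2*L-K+1) j + prof M K (2*L) j + prof M K (2*L+1) j =
  if j == 0 then 4*L - 2*K + 5 else if j == M then 4*L - 2*K + 5 else 4.
Proof.
move=> -> h1 h2 hj; rewrite /prof (@QA (K+L) K (2*L-K+1) j) ?(@QB (K+L) K (2*L-K+1) j); try lia.
rewrite (@CA (K+L) K (2*L) j) ?(@CBp (K+L) K (2*L) j); try lia.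
rewrite (@CA (K+L) K (2*L+1) j) ?(@CBp (K+L) K (2*L+1) j); try lia.
rewrite /indR.
(sp; lia).
Qed.


Definition rep (T : Type) (r : nat) (s : seq T) := flatten (nseq r s).

Lemma tocc_cat n (s1 s2 : seq {set monomial n}) i :
  total_occ (s1 ++ s2) i = total_occ s1 i + total_occ s2 i.
Proof. by rewrite /total_occ big_cat. Qed.

Lemma tocc_rep n r (s : seq {set monomial n}) i :
  total_occ (rep r s) i = r * total_occ s i.
Proof.
elim: r => [|r IH]; first by rewrite /rep /total_occ big_nil.
by rewrite /rep /= -/(rep r s) tocc_cat IH mulSn.
Qed.

Lemma tocc_1 n (B : {set monomial n}) i : total_occ [:: B] i = \sum_(p in B) var_occ i p.
Proof. by rewrite /total_occ big_seq1. Qed.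

Lemma mem_rep (T : eqType) r (s : seq T) x : x \in rep r s -> x \in s.
Proof. elim: r => [|r IH] //=; rewrite mem_cat => /orP[] //; exact: IH. Qed.

Lemma rep_nil (T : eqType) r (s : seq T) : 0 < r -> s != [::] -> rep r s != [::].
Proof. by case: r => // r _; case: s. Qed.

Lemma occC1 n M K t d (i : 'I_n.+1) : K <= M -> d <= M -> n = M + 2*t ->
  total_occ [:: CB n M K t d] i = if t <= i <= t + M then prof M K d (i - t) else 0.
Proof. by move=> *; rewrite tocc_1 occC. Qed.


Ltac sp2 := repeat match goal with
 | |- context [if (?a <= ?b) && _ then _ else _] => let H := fresh in case: (leqP a b) => H; rewrite /=
 | |- context [if ?a <= ?b then _ else _] => let H := fresh in case: (leqP a b) => H
 | |- context [if ?a < ?b then _ else _] => let H := fresh in case: (ltnP a b) => H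
 | |- context [if ?a == ?b then _ else _] => let H := fresh in case: (@eqP _ a b) => H
 end.

Lemma inQ n M K t B : K <= M -> n = M + 2*t -> B \in [:: CB n M K t 0] -> is_quad_monomial_basis (K + 2*t) B.
Proof. by move=> hK hn; rewrite inE => /eqP ->; apply: CB_ok. Qed.

Lemma main (n : nat) : forall M K t, K <= M -> n = M + 2*t ->
  exists s : seq {set monomial n},
    [/\ s != [::], (forall B, B \in s -> is_quad_monomial_basis (K + 2*t) B) &
        exists2 c, 0 < c & forall i : 'I_n.+1, total_occ s i = if t <= i <= t + M then c else 0].
Proof.
elim/ltn_ind => M IH K t hK hn.
have CBok d B : B \in [:: CB n M K t d] -> is_quad_monomial_basis (K + 2*t) B.
  by rewrite inE => /eqP ->; apply: CB_ok.
case: (posnP M) => hM0.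
  subst M; have hK0 : K = 0 by lia. subst K.
  exists [:: CB n 0 0 t 0]; split => //; first exact: CBok.
  exists 2 => // i; rewrite occC1 //.
  case: ifP => h //; rewrite (@P_L 0 0 0) //; first by sp2; lia.
  move/andP: h; lia.
case: (posnP K) => hK0.
  subst K.
  exists ([:: CB n M 0 t M] ++ rep M [:: CB n M 0 t 0]); split.
  - by [].
  - move=> B; rewrite mem_cat => /orP[]; first exact: CBok.
    by move/mem_rep; exact: CBok.
  exists (4*M+2); first lia; move=> i; rewrite tocc_cat tocc_rep !occC1 //; try lia.
  case: (boolP (t <= i <= t + M)) => hi /=; last by rewrite muln0.
  move/andP: hi => [hi1 hi2].
  rewrite (@P_L M 0 M) ?P_D0 //; try lia.
  sp2; lia.
case: (eqVneq K 1) => hK1.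
  subst K.
  case: (eqVneq M 1) => hM1.
    subst M.
    exists [:: CB n 1 1 t 0]; split => //; first exact: CBok.
    exists 1 => // i; rewrite occC1 //.
    case: ifP => h //; rewrite P_11 //; move/andP: h; lia.
  exists (rep 3 [:: CB n M 1 t (M-1)] ++ rep (M-2) [:: CB n M 1 t 0]); split.
  - by [].
  - move=> B; rewrite mem_cat => /orP[]; move/mem_rep; exact: CBok.
  exists (4*M-2); first lia; move=> i; rewrite tocc_cat !tocc_rep !occC1 //; try lia.
  case: (boolP (t <= i <= t + M)) => hi /=; last by rewrite !muln0.
  move/andP: hi => [hi1 hi2].
  rewrite (@P_L M 1 (M-1)) ?P_D1 //; try lia.
  sp2; lia.
have hK2 : 2 <= K by lia.
set L := M - K.
have hML : M = K + L by rewrite /L; lia.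
have IH1 : exists s : seq {set monomial n},
    [/\ s != [::], (forall B, B \in s -> is_quad_monomial_basis (K + 2*t) B) &
        exists2 c, 0 < c & forall i : 'I_n.+1, total_occ s i = if t + 1 <= i <= t + M - 1 then c else 0].
  have [|||s [h1 h2 [c hc1 hc2]]] := IH (M-2) _ (K-2) (t+1); try lia.
  exists s; split => //.
    by move=> B /h2; have -> : K - 2 + 2 * (t + 1) = K + 2*t by lia.
  exists c => // i; rewrite hc2; congr (if _ then _ else _); apply/idP/idP => /andP[? ?]; apply/andP; lia.
have [s1 [hs1 hv1 [c1 hc1pos hc1]]] := IH1.
case: (leqP K L) => hKL.
  exists (rep c1 [:: CB n M K t L] ++ rep (L - K) s1); split.
  - by case: c1 hc1pos {hc1}.
  - move=> B; rewrite mem_cat => /orP[]; first by move/mem_rep; exact: CBok.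
    by move/mem_rep; exact: hv1.
  exists (c1 * (L - K + 2)); first by rewrite muln_gt0 hc1pos; lia.
  move=> i; rewrite tocc_cat !tocc_rep !occC1 ?hc1 //; try lia.
  case: (boolP (t <= i <= t + M)) => hi /=.
    move/andP: hi => [hi1 hi2].
    rewrite (@P_L M K L) //; try lia.
    sp2; nia.
  sp2; lia.
case: (leqP K (2*L)) => hK2L.
  exists (rep c1 [:: CB n M K t (2*L-K+1); CB n M K t (2*L); CB n M K t (2*L+1)] ++ rep (4*L-2*K+1) s1); split.
  - by case: c1 hc1pos {hc1}.
  - move=> B; rewrite mem_cat => /orP[]; last by move/mem_rep; exact: hv1.
    move/mem_rep; rewrite !inE => /or3P[] /eqP ->; exact: CB_ok.
  exists (c1 * (4*L - 2*K + 5)); first by rewrite muln_gt0 hc1pos; lia.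
  move=> i; rewrite tocc_cat !tocc_rep ?hc1 //.
  have -> : total_occ [:: CB n M K t (2 * L - K + 1); CB n M K t (2 * L); CB n M K t (2 * L + 1)] i =
     total_occ [:: CB n M K t (2 * L - K + 1)] i + total_occ [:: CB n M K t (2 * L)] i + total_occ [:: CB n M K t (2 * L + 1)] i.
    by rewrite -!tocc_cat.
  rewrite !occC1 //; try lia.
  case: (boolP (t <= i <= t + M)) => hi /=.
    move/andP: hi => [hi1 hi2].
    rewrite (@P_5 M K L) //; try lia.
    sp2; nia.
  sp2; lia.
case: (eqVneq K (2*L+1)) => hK21.
  have hL1 : 1 <= L by lia.
  have [|||s2 [h21 h22 [c2 hc2pos hc2]]] := IH (L+1) _ 1 (t+L); try lia.
  exists (rep c2 ([:: CB n M K t 0] ++ rep 3 [:: CB n M K t K]) ++ rep 2 s2); split.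
  - by case: c2 hc2pos {hc2}.
  - move=> B; rewrite mem_cat => /orP[]; last first.
      by move/mem_rep => /h22; have -> : 1 + 2 * (t + L) = K + 2*t by lia.
    move/mem_rep; rewrite mem_cat => /orP[]; first exact: CBok.
    by move/mem_rep; exact: CBok.
  exists (6 * c2); first lia.
  move=> i; rewrite !(tocc_cat, tocc_rep) ?hc2 // !occC1 //; try lia.
  case: (boolP (t <= i <= t + M)) => hi /=.
    move/andP: hi => [hi1 hi2].
    rewrite (@P_4 M K L (i - t)) //; try lia.
    sp2; nia.
  sp2; lia.
have hK22 : 2*L + 2 <= K by lia.
have [|||s2 [h21 h22 [c2 hc2pos hc2]]] := IH (M - 2*L - 2) _ (K - 2*L - 2) (t+L+1); try lia.
exists (rep (c1 * c2) [:: CB n M K t M] ++ rep (L * c2) s1 ++ rep c1 s2); split.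
- by rewrite /rep; case: (c1 * c2) (muln_gt0 c1 c2) => [|?]; rewrite hc1pos hc2pos.
- move=> B; rewrite !mem_cat => /or3P[]; first by move/mem_rep; exact: CBok.
    by move/mem_rep; exact: hv1.
  by move/mem_rep => /h22; have -> : K - 2 * L - 2 + 2 * (t + L + 1) = K + 2*t by lia.
exists (c1 * c2 * (L + 1)); first by rewrite !muln_gt0 hc1pos hc2pos addn1.
move=> i; rewrite !tocc_cat !tocc_rep ?hc1 ?hc2 // !occC1 //; try lia.
case: (boolP (t <= i <= t + M)) => hi /=.
  move/andP: hi => [hi1 hi2].
  rewrite (@P_6 M K L) //; try lia.
  sp2; nia.
sp2; lia.
Qed.


Theorem proposition6p7 (n k : nat) (hn : (1 <= n)%N) (hk : (k <= n)%N) :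
  exists s : seq {set monomial n},
    s != [::] /\
    (forall B, B \in s -> is_quad_monomial_basis k B) /\
    X_balanced s.
Proof.
have hn0 : n = n + 2 * 0 by rewrite muln0 addn0.
have [s [h1 h2 [c _ hc]]] := @main n n k 0 hk hn0.
exists s; split => //; split.
- by move=> B /h2; rewrite muln0 addn0.
- exists c => i; rewrite hc leq0n add0n /=.
  by rewrite -ltnS ltn_ord.
Qed.
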